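(* Let $l,d\ge 1$ and let $(X,Y)$ be a random vector in $\mathbb{R}^l\times\mathbb{R}^d$ with joint law $W$. Let $\rho:\mathbb{R}^l\to\mathbb{R}$ be a polynomial of degree at most $1$ with $\rho(X)\neq 0$ almost surely, and assume that the random vector $Z:=Y/\rho(X)\in\mathbb{R}^d$ is independent of $X$. Let $W_X$ and $W_Z$ denote the laws of $X$ and $Z$, and assume $X$ and $Z$ have finite moments of all orders. For each $m\in\mathbb{N}=\{0,1,2,\dots\}$ let $\{P^{(m)}_k:k\in\mathbb{N}^l\}$ be polynomials on $\mathbb{R}^l$, $P^{(m)}_k$ of total degree $|k|$, such that $\int P^{(m)}_kP^{(m)}_{k'}\,\rho(x)^{2m}\,W_X(dx)=0$ whenever $k\neq k'$; and let $\{R_s:s\in\mathbb{N}^d\}$ be polynomials on $\mathbb{R}^d$, $R_s$ of total degree $|s|$, such that $\int R_sR_{s'}\,dW_Z=0$ whenever $s\ne s'$. For $n=(k,s)\in\mathbb{N}^{l}\times\mathbb{N}^d$ define $$G_n(x,y)=P^{(|s|)}_k(x)\,\rho(x)^{|s|}\,R_s\!\left(\frac{y}{\rho(x)}\right).$$ Then each $G_n$ is a polynomial in $(x,y)$ of total degree $|n|=|k|+|s|$, and for $n=(k,s)$, $n'=(k',s')$, $$\int G_n G_{n'}\,dW=\delta_{nn'}\int \big(P^{(|s|)}_k\big)^2\rho^{2|s|}\,dW_X\int R_s^2\,dW_Z .$$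
   Context: For $z\in\mathbb{R}^d$ (or a multi-index), $|z|=\sum_i z_i$. $\delta_{nn'}$ is the Kronecker delta. *)

(* Defs.v *)
From HB Require Import structures.
From mathcomp Require Import all_boot all_order all_algebra.
From mathcomp Require mpoly.
Module MPSize.
Import mpoly.
(* msz p = msize p = 1 + total degree of p, and 0 for p = 0 *)
Definition msz {n : nat} {R : ringType} (p : mpoly.mpoly n R) : nat := msize p.
End MPSize.
Notation msz := MPSize.msz.
From mathcomp Require Import all_classical all_reals all_analysis.

Set Implicit Arguments.
Unset Strict Implicit.
Unset Printing Implicit Defensive.

Import Order.TTheory GRing.Theory Num.Theory.
Local Open Scope classical_set_scope.
Local Open Scope ring_scope.

Notation mpol n R := (mpoly.mpoly n R).
Notation mindex n := (mpoly.multinom n).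
Notation mideg k := (mpoly.mdeg k).
Notation peval v p := (mpoly.meval v p).

Definition catv (R : Type) (l d : nat) (x : 'I_l -> R) (y : 'I_d -> R)
  : 'I_(l + d) -> R :=
  fun i => match fintype.split i with inl a => x a | inr b => y b end.

Definition vec_at (T R : Type) (n : nat) (X : 'I_n -> T -> R) (w : T) : 'I_n -> R :=
  fun i => X i w.

Definition Zof (R : realType) (T : Type) (l d : nat) (rho : mpol l R)
  (X : 'I_l -> T -> R) (Y : 'I_d -> T -> R) : 'I_d -> T -> R :=
  fun j w => Y j w / peval (vec_at X w) rho.

(* Independence of the random vectors X : T -> R^l and Z : T -> R^d under P:
   the product rule on the generating pi-systems of measurable rectangles,
   i.e. independence of sigma(X) and sigma(Z). *)
Definition indep_vec (R : realType) (dT : measure_display) (T : measurableType dT)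
  (P : probability T R) (l d : nat) (X : 'I_l -> T -> R) (Z : 'I_d -> T -> R) : Prop :=
  forall (A : 'I_l -> set R) (B : 'I_d -> set R),
    (forall i, measurable (A i)) -> (forall j, measurable (B j)) ->
    P ([set w | forall i, A i (X i w)] `&` [set w | forall j, B j (Z j w)]) =
    (P [set w | forall i, A i (X i w)] * P [set w | forall j, B j (Z j w)])%E.

Definition Gfun (R : realType) (l d : nat) (rho : mpol l R)
  (Pp : nat -> mindex l -> mpol l R) (Rs : mindex d -> mpol d R)
  (k : mindex l) (s : mindex d) (x : 'I_l -> R) (y : 'I_d -> R) : R :=
  peval x (Pp (mideg s) k) * peval x rho ^+ mideg s *
  peval (fun j => y j / peval x rho) (Rs s).

(* Main.v *)
Require Import Defs.
From HB Require Import structures.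
From mathcomp Require Import all_boot all_order all_algebra.
From mathcomp Require mpoly.
From Stdlib Require Import Lia.
From mathcomp Require Import zify.
From mathcomp Require Import ring.
Set Implicit Arguments.
Unset Strict Implicit.
Unset Printing Implicit Defensive.

Module Part1.
Import mpoly.
Import GRing.Theory.
Local Open Scope ring_scope.

Section Sz.
Variable (R : idomainType).

Lemma msizeM_le2 n (p q : {mpoly R[n]}) : (msize (p * q) <= (msize p + msize q).-1)%N.
Proof.
have [->|p0] := eqVneq p 0; first by rewrite mul0r msize0.
have [->|q0] := eqVneq q 0; first by rewrite mulr0 msize0.
by rewrite msizeM.
Qed.

Lemma msize_prod_le n (I : Type) (r : seq I) (P : pred I) (F : I -> {mpoly R[n]}) :
  (msize (\prod_(i <- r | P i) F i) <= (\sum_(i <- r | P i) (msize (F i)).-1).+1)%N.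
Proof.
elim/big_rec2: _ => [|i s q _ IH]; first by rewrite msize1.
apply: (leq_trans (msizeM_le2 _ _)).
move: IH; case: (msize (F i)) => [|a] /=; case: (msize q) => [|b] /=; lia.
Qed.

Lemma msizeX_le n (p : {mpoly R[n]}) b e :
  (msize p <= b.+1)%N -> (msize (p ^+ e) <= (e * b).+1)%N.
Proof.
move=> hb; elim: e => [|e IH]; first by rewrite expr0 msize1.
rewrite exprS; apply: (leq_trans (msizeM_le2 _ _)).
move: IH hb; case: (msize p) => [|a]; case: (msize (p ^+ e)) => [|c] /=; nia.
Qed.

Lemma msize_comp_le n k (p : {mpoly R[n]}) (lq : n.-tuple {mpoly R[k]}) (b : nat) :
  (forall i, (msize (tnth lq i) <= b.+1)%N) ->
  (msize (p \mPo lq) <= ((msize p).-1 * b).+1)%N.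
Proof.
move=> hb; rewrite comp_mpolyE; apply: (leq_trans (msize_sum _ _ _)).
rewrite big_seq_cond; elim/big_ind: _ => //; first by move=> x y; rewrite geq_max => -> ->.
move=> m /andP[mp _]; apply: (leq_trans (msizeZ_le _ _)).
apply: (leq_trans (msize_prod_le _ _ _)); rewrite ltnS.
have : (mdeg m < msize p)%N by apply: msize_mdeg_lt mp.
rewrite mdegE => hm.
apply: (@leq_trans (\sum_(i < n) m i * b)%N).
  apply: leq_sum => i _.
  have := msizeX_le (m i) (hb i); case: (msize _) => [|c] /=; lia.
rewrite -big_distrl /= leq_mul2r; apply/orP; right; move: hm; case: (msize p) => //= ? ; by rewrite ltnS.
Qed.

Lemma comp_comp n k j (p : {mpoly R[n]}) (lq1 : n.-tuple {mpoly R[k]})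
  (lq2 : k.-tuple {mpoly R[j]}) :
  (p \mPo lq1) \mPo lq2 = p \mPo [tuple (tnth lq1 i) \mPo lq2 | i < n].
Proof.
rewrite [p \mPo lq1]comp_mpolyE [RHS]comp_mpolyE raddf_sum /=.
apply: eq_bigr => m _; rewrite linearZ /= rmorph_prod /=; congr (_ *: _).
by apply: eq_bigr => i _; rewrite rmorphXn tnth_mktuple.
Qed.

End Sz.

Section Main.
Variable (R : fieldType) (l d : nat).

Definition lqX : l.-tuple {mpoly R[l + d]} := [tuple 'X_(lshift d i) | i < l].
Definition lqY : d.-tuple {mpoly R[l + d]} := [tuple 'X_(rshift l j) | j < d].
Definition backX : (l + d).-tuple {mpoly R[l]} :=
  [tuple (match fintype.split i with inl a => 'X_a | inr _ => 0 end) | i < l + d].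
Definition backY : (l + d).-tuple {mpoly R[d]} :=
  [tuple (match fintype.split i with inl _ => 0 | inr b => 'X_b end) | i < l + d].

Definition liftX (p : {mpoly R[l]}) := p \mPo lqX.

Lemma liftX_back p : liftX p \mPo backX = p.
Proof.
rewrite /liftX comp_comp -[RHS]comp_mpoly_id; congr (_ \mPo _).
apply: eq_from_tnth => i; rewrite !tnth_mktuple comp_mpolyXU -tnth_nth tnth_mktuple.
by rewrite (unsplitK (inl i)).
Qed.

Lemma msize_liftX p : msize (liftX p) = msize p.
Proof.
have h1 : (msize (liftX p) <= ((msize p).-1 * 1).+1)%N.
  by apply: msize_comp_le => i; rewrite tnth_mktuple msizeX mdeg1.
have h2 : (msize p <= ((msize (liftX p)).-1 * 1).+1)%N.
  rewrite -{1}(liftX_back p); apply: msize_comp_le => i; rewrite tnth_mktuple.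
  by case: fintype.split => [a|b]; rewrite ?msizeX ?mdeg1 ?msize0.
have [->|p0] := eqVneq p 0; first by rewrite /liftX comp_mpoly0 !msize0.
have lp0 : liftX p != 0.
  by apply/negP => /eqP h; move: p0; rewrite -(liftX_back p) h comp_mpoly0 eqxx.
move: h1 h2; rewrite !muln1 -(mpolySpred _ p0) -(mpolySpred _ lp0).
by move=> h1 h2; apply/eqP; rewrite eqn_leq h1 h2.
Qed.


Lemma meval_liftX (x : 'I_l -> R) (y : 'I_d -> R) p :
  (liftX p).@[catv x y] = p.@[x].
Proof.
rewrite comp_mpoly_meval; apply: meval_eq => i.
by rewrite tnth_mktuple mevalXU /catv (unsplitK (inl i)).
Qed.

Lemma meval_liftY (x : 'I_l -> R) (y : 'I_d -> R) (q : {mpoly R[d]}) :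
  (q \mPo lqY).@[catv x y] = q.@[y].
Proof.
rewrite comp_mpoly_meval; apply: meval_eq => i.
by rewrite tnth_mktuple mevalXU /catv (unsplitK (inr i)).
Qed.

Lemma liftY_back (q : {mpoly R[d]}) : (q \mPo lqY) \mPo backY = q.
Proof.
rewrite comp_comp -[RHS]comp_mpoly_id; congr (_ \mPo _).
apply: eq_from_tnth => i; rewrite !tnth_mktuple comp_mpolyXU -tnth_nth tnth_mktuple.
by rewrite (unsplitK (inr i)).
Qed.

Lemma liftX_backY (p : {mpoly R[l]}) :
  exists c, liftX p \mPo backY = c%:MP.
Proof.
rewrite /liftX comp_comp; set C := _ \mPo _.
have : (msize C <= ((msize p).-1 * 0).+1)%N.
  apply: msize_comp_le => i; rewrite !tnth_mktuple comp_mpolyXU -tnth_nth tnth_mktuple.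
  by rewrite (unsplitK (inl i)) msize0.
by rewrite muln0 => /msize1_polyC ->; exists C@_0.
Qed.


Lemma part1 (rho Pk : {mpoly R[l]}) (Rs : {mpoly R[d]}) (K S : nat) :
  (msize rho <= 2)%N -> msize Pk = K.+1 -> msize Rs = S.+1 ->
  exists g : {mpoly R[l + d]}, msize g = (K + S).+1 /\
   forall x y, rho.@[x] != 0 ->
     g.@[catv x y] = Pk.@[x] * rho.@[x] ^+ S * Rs.@[fun j => y j / rho.@[x]].
Proof.
move=> hrho hP hR.
pose Q := \sum_(a <- msupp Rs)
   Rs@_a *: (('X_[a] \mPo lqY) * (liftX rho) ^+ (S - mdeg a)).
have hQ1 : (msize Q <= S.+1)%N.
  apply: (leq_trans (msize_sum _ _ _)); rewrite big_seq_cond.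
  elim/big_ind: _ => //; first by move=> u v; rewrite geq_max => -> ->.
  move=> a /andP[am _]; apply: (leq_trans (msizeZ_le _ _)).
  apply: (leq_trans (msizeM_le2 _ _)).
  have h1 : (msize ('X_[a] \mPo lqY) <= ((msize ('X_[a] : {mpoly R[d]})).-1 * 1).+1)%N.
    by apply: msize_comp_le => i; rewrite tnth_mktuple msizeX mdeg1.
  have h2 : (msize (liftX rho ^+ (S - mdeg a)) <= ((S - mdeg a) * 1).+1)%N.
    by apply: msizeX_le; rewrite msize_liftX.
  have h3 : (mdeg a < S.+1)%N by rewrite -hR; apply: msize_mdeg_lt.
  move: h1 h2; rewrite msizeX /= !muln1.
  case: (msize ('X_[a] \mPo lqY)) => [|u]; case: (msize (liftX rho ^+ (S - mdeg a))) => [|v] /=; lia.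
have Rs0 : Rs != 0 by rewrite -msize_poly_eq0 hR.
have [c hc] := liftX_backY rho.
have hQ0 : Q \mPo backY = \sum_(a <- msupp Rs) (Rs@_a * c ^+ (S - mdeg a)) *: 'X_[a].
  rewrite raddf_sum /=; apply: eq_bigr => a _.
  rewrite comp_mpolyZ rmorphM rmorphXn /= liftY_back hc -rmorphXn /= mulrC mul_mpolyC.
  by rewrite scalerA.
set a0 := mlead Rs.
have a0s : a0 \in msupp Rs by apply: mlead_supp.
have da0 : mdeg a0 = S by apply/eqP; rewrite -eqSS mlead_deg // hR.
have hc0 : (Q \mPo backY)@_a0 = Rs@_a0.
  rewrite hQ0 raddf_sum /= (bigD1_seq a0) ?msupp_uniq //= big1_seq.
    by rewrite mcoeffZ mcoeffX eqxx mulr1 da0 subnn expr0 mulr1 addr0.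
  by move=> a /andP[aa0 _]; rewrite mcoeffZ mcoeffX (negbTE aa0) mulr0.
have Q0 : Q != 0.
  apply/negP => /eqP hq; move: hc0; rewrite hq comp_mpoly0 mcoeff0 => /esym/eqP.
  by rewrite mcoeff_eq0 a0s.
have hQ2 : (S.+1 <= msize Q)%N.
  have : (S < msize (Q \mPo backY))%N.
    rewrite -da0; apply: msize_mdeg_lt; rewrite mcoeff_msupp hc0 -mcoeff_msupp //.
  move=> h; apply: (leq_trans h).
  have : (msize (Q \mPo backY) <= ((msize Q).-1 * 1).+1)%N.
    apply: msize_comp_le => i; rewrite tnth_mktuple.
    by case: fintype.split => [u|v]; rewrite ?msizeX ?mdeg1 ?msize0.
  by rewrite muln1 -(mpolySpred _ Q0).
have P0 : Pk != 0 by rewrite -msize_poly_eq0 hP.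
have LP0 : liftX Pk != 0 by rewrite -msize_poly_eq0 msize_liftX hP.
exists (liftX Pk * Q); split.
  rewrite msizeM // msize_liftX hP.
  have -> : msize Q = S.+1 by apply/eqP; rewrite eqn_leq hQ1 hQ2.
  by rewrite addSn addnS.
move=> x y r0; rewrite mevalM meval_liftX -mulrA; congr (_ * _).
set r := rho.@[x].
rewrite raddf_sum (mevalE _ Rs) mulr_sumr; apply: eq_big_seq => a am /=.
rewrite mevalZ mevalM meval_liftY rmorphXn /= meval_liftX mevalX.
have h3 : (mdeg a <= S)%N by rewrite -ltnS -hR; apply: msize_mdeg_lt.
have -> : \prod_i (y i / r) ^+ a i = (\prod_i y i ^+ a i) * r^-1 ^+ mdeg a.
  by rewrite mdegE -prodrXr -big_split /=; apply: eq_bigr => i _; rewrite exprMn.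
rewrite -/r -[in r ^+ S](subnK h3) exprD exprVn.
have rm : r ^+ mdeg a != 0 by rewrite expf_neq0.
field.
exact: rm.
Qed.

End Main.
End Part1.

Module MPh.
Import mpoly.
Local Open Scope ring_scope.
Definition pmul (R : comRingType) n (p q : {mpoly R[n]}) := p * q.
Definition pexp (R : comRingType) n (p : {mpoly R[n]}) e := p ^+ e.
Lemma meval_pmul (R : comRingType) n (p q : {mpoly R[n]}) v :
  meval v (pmul p q) = meval v p * meval v q.
Proof. exact: mevalM. Qed.
Lemma meval_pexp (R : comRingType) n (p : {mpoly R[n]}) e v :
  meval v (pexp p e) = meval v p ^+ e.
Proof. by rewrite /pexp GRing.rmorphXn. Qed.
End MPh.

From mathcomp Require Import all_classical all_reals all_analysis.
From mathcomp Require Import measurable_realfun.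
From mathcomp Require Import lra.
Import Order.TTheory GRing.Theory Num.Theory.
Import numFieldNormedType.Exports.
Local Open Scope classical_set_scope.
Local Open Scope ring_scope.

Section Bounded.
Context d (T : measurableType d) (R : realType) (P : probability T R).

Definition bm (f : T -> R) := measurable_fun setT f /\ exists M, forall w, `|f w| <= M.

Lemma bm_int f : bm f -> P.-integrable setT (EFin \o f).
Proof.
move=> [mf [M hM]].
apply: (@le_integrable _ _ _ _ _ _ _ (EFin \o cst M)) => //.
- exact/measurable_realfun.measurable_EFinP.
- move=> w _ /=; rewrite !lee_fin; apply: (le_trans (hM w)).
  exact: ler_norm.
- exact: finite_measure_integrable_cst.
Qed.

Lemma bm_add f g : bm f -> bm g -> bm (f \+ g).
Proof.
move=> [mf [M hM]] [mg [N hN]]; split; first exact: measurable_funD.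
exists (M + N) => w /=; apply: (le_trans (ler_normD _ _)); exact: lerD.
Qed.

Lemma bm_mul f g : bm f -> bm g -> bm (f \* g).
Proof.
move=> [mf [M hM]] [mg [N hN]]; split; first exact: measurable_funM.
exists (M * N) => w /=; rewrite normrM; apply: ler_pM => //.
Qed.

Lemma bm_cst c : bm (cst c).
Proof. by split => //; exists `|c|. Qed.

Lemma bm_indic (A : set T) : measurable A -> bm (\1_A).
Proof.
move=> mA; split; first exact: measurable_indic.
exists 1 => w; rewrite indicE; case: (w \in A) => /=; by rewrite ?normr1 ?normr0.
Qed.

End Bounded.

Section Rect.
Context d (T : measurableType d) (R : realType) (P : probability T R).

Definition rect n (V : 'I_n -> T -> R) (A : 'I_n -> set R) : set T :=
  [set w | forall i, A i (V i w)].

Lemma rect_measurable n (V : 'I_n -> T -> R) A :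
  (forall i, measurable_fun setT (V i)) -> (forall i, measurable (A i)) ->
  measurable (rect V A).
Proof.
move=> mV mA.
have -> : rect V A = \bigcap_(i in [set: 'I_n]) (setT `&` V i @^-1` A i).
  by apply/seteqP; split => w /= h i; [move=> _; split => //; exact: h|case: (h i I)].
apply: fin_bigcap_measurable. exact: finite_finset.
by move=> i _; apply: mV.
Qed.

Inductive Sv n (V : 'I_n -> T -> R) : (T -> R) -> Prop :=
 | SvI A : (forall i, measurable (A i)) -> Sv V (\1_(rect V A))
 | SvA f g : Sv V f -> Sv V g -> Sv V (f \+ g)
 | SvS c f : Sv V f -> Sv V (fun w => c * f w).

Variables (n : nat) (V : 'I_n -> T -> R) (mV : forall i, measurable_fun setT (V i)).

Lemma Sv_bm f : Sv V f -> bm f.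
Proof.
elim => [A mA|f1 f2 _ h1 _ h2|c f1 _ h1].
- by apply: bm_indic; exact: rect_measurable.
- exact: bm_add.
- have -> : (fun w => c * f1 w) = (cst c) \* f1 by [].
  by apply: bm_mul => //; exact: bm_cst.
Qed.

Lemma Sv_mul f g : Sv V f -> Sv V g -> Sv V (f \* g).
Proof.
move=> hf; elim: hf g => [A mA|f1 f2 _ h1 _ h2|c f1 _ h1] g hg.
- elim: hg => [B mB|g1 g2 _ h1 _ h2|c g1 _ h1].
  + have -> : \1_(rect V A) \* \1_(rect V B) = \1_(rect V (fun i => A i `&` B i)) :> (T -> R).
      apply/funext => w /=; rewrite !indicE.
      have -> : (w \in rect V (fun i => A i `&` B i)) = (w \in rect V A) && (w \in rect V B).
        apply/idP/andP; rewrite !inE.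
          by move=> h; split => i; case: (h i).
        by case=> h1 h2 i; split; [exact: h1|exact: h2].
      by case: (w \in rect V A); case: (w \in rect V B); rewrite /= ?mulr1 ?mulr0.
    by apply: SvI => i; apply: measurableI.
  + have -> : \1_(rect V A) \* (g1 \+ g2) = (\1_(rect V A) \* g1) \+ (\1_(rect V A) \* g2) :> (T -> R).
      by apply/funext => w /=; rewrite mulrDr.
    exact: SvA.
  + have -> : \1_(rect V A) \* (fun w => c * g1 w) = (fun w => c * (\1_(rect V A) \* g1) w) :> (T -> R).
      by apply/funext => w /=; rewrite mulrCA.
    exact: SvS.
- have -> : (f1 \+ f2) \* g = (f1 \* g) \+ (f2 \* g) by apply/funext => w /=; rewrite mulrDl.
  by apply: SvA; [exact: h1|exact: h2].
- have -> : (fun w => c * f1 w) \* g = (fun w => c * (f1 \* g) w).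
    by apply/funext => w /=; rewrite mulrA.
  by apply: SvS; exact: h1.
Qed.

Lemma Sv_zero : Sv V (cst 0).
Proof.
have -> : cst 0 = (fun w => 0 * \1_(rect V (fun=> setT)) w) :> (T -> R).
  by apply/funext => w; rewrite mul0r.
by apply: SvS; apply: SvI.
Qed.

Lemma Sv_sum (I : Type) (r : seq I) (F : I -> T -> R) :
  (forall i, Sv V (F i)) -> Sv V (fun w => \sum_(i <- r) F i w).
Proof.
move=> hF; elim: r => [|a r IH].
  have -> : (fun w => \sum_(i <- [::]) F i w) = cst 0 :> (T -> R).
    by apply/funext => w; rewrite big_nil.
  exact: Sv_zero.
have -> : (fun w => \sum_(i <- a :: r) F i w) = F a \+ (fun w => \sum_(i <- r) F i w).
  by apply/funext => w; rewrite big_cons.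
exact: SvA.
Qed.

Lemma Sv_one : Sv V (cst 1).
Proof.
have -> : cst 1 = \1_(rect V (fun=> setT)) :> (T -> R).
  by apply/funext => w; rewrite indicE mem_set.
by apply: SvI.
Qed.

Lemma Sv_prod (I : Type) (r : seq I) (F : I -> T -> R) :
  (forall i, Sv V (F i)) -> Sv V (fun w => \prod_(i <- r) F i w).
Proof.
move=> hF; elim: r => [|a r IH].
  have -> : (fun w => \prod_(i <- [::]) F i w) = cst 1 :> (T -> R).
    by apply/funext => w; rewrite big_nil.
  exact: Sv_one.
have -> : (fun w => \prod_(i <- a :: r) F i w) = F a \* (fun w => \prod_(i <- r) F i w).
  by apply/funext => w; rewrite big_cons.
exact: Sv_mul.
Qed.

Lemma Sv_pow f e : Sv V f -> Sv V (fun w => f w ^+ e).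
Proof.
move=> hf; elim: e => [|e IH].
  have -> : (fun w => f w ^+ 0) = cst 1 :> (T -> R) by apply/funext => w; rewrite expr0.
  exact: Sv_one.
have -> : (fun w => f w ^+ e.+1) = f \* (fun w => f w ^+ e).
  by apply/funext => w; rewrite exprS.
exact: Sv_mul.
Qed.

Lemma Sv_coord i (S : set R) : measurable S -> Sv V (fun w => \1_S (V i w)).
Proof.
move=> mS.
have -> : (fun w => \1_S (V i w)) = \1_(rect V (fun j => if j == i then S else setT)) :> (T -> R).
  apply/funext => w; rewrite !indicE.
  have -> : (w \in rect V (fun j => if j == i then S else setT)) = (V i w \in S) => //.
  apply/idP/idP; rewrite !inE.
    by move/(_ i); rewrite eqxx.
  by move=> h j; case: eqP => // ->.
by apply: SvI => j; case: eqP.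
Qed.

End Rect.

Section Indep.
Context d (T : measurableType d) (R : realType) (P : probability T R).
Variables (n1 n2 : nat) (V1 : 'I_n1 -> T -> R) (V2 : 'I_n2 -> T -> R).
Hypotheses (mV1 : forall i, measurable_fun setT (V1 i))
  (mV2 : forall i, measurable_fun setT (V2 i)).
Hypothesis hind : forall (A : 'I_n1 -> set R) (B : 'I_n2 -> set R),
    (forall i, measurable (A i)) -> (forall j, measurable (B j)) ->
    P (rect V1 A `&` rect V2 B) = (P (rect V1 A) * P (rect V2 B))%E.

Lemma Rint_indic (S : set T) : measurable S -> \int[P]_w (\1_S w) = fine (P S).
Proof. by move=> mS; rewrite /Rintegral integral_indic // setIT. Qed.

Lemma Sv_indep f g : Sv V1 f -> Sv V2 g ->
  \int[P]_w (f w * g w) = \int[P]_w f w * \int[P]_w g w.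
Proof.
move=> hf; elim: hf g => [A mA|f1 f2 s1 h1 s2 h2|c f1 s1 h1] g hg.
- elim: hg => [B mB|g1 g2 t1 h1 t2 h2|c g1 t1 h1].
  + have mrA := rect_measurable mV1 mA; have mrB := rect_measurable mV2 mB.
    rewrite (@eq_Rintegral _ _ _ P setT (\1_(rect V1 A `&` rect V2 B))); last first.
      by move=> w _; rewrite indicI.
    rewrite !Rint_indic //; last exact: measurableI.
    by rewrite hind // fineM //; exact: fin_num_measure.
  + rewrite (@eq_Rintegral _ _ _ P setT (fun w => \1_(rect V1 A) w * g1 w + \1_(rect V1 A) w * g2 w)); last first.
      by move=> w _; rewrite mulrDr.
    have bA := Sv_bm mV1 (SvI V1 mA).
    rewrite RintegralD //; last 2 first.
    - exact/bm_int/bm_mul/(Sv_bm mV2 t1).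
    - exact/bm_int/bm_mul/(Sv_bm mV2 t2).
    rewrite h1 h2 -mulrDr RintegralD //.
    - exact/bm_int/(Sv_bm mV2 t1).
    - exact/bm_int/(Sv_bm mV2 t2).
  + rewrite (@eq_Rintegral _ _ _ P setT (fun w => c * (\1_(rect V1 A) w * g1 w))); last first.
      by move=> w _; rewrite mulrCA.
    have bA := Sv_bm mV1 (SvI V1 mA).
    rewrite RintegralZl //; last exact/bm_int/bm_mul/(Sv_bm mV2 t1).
    rewrite h1 RintegralZl //; last exact/bm_int/(Sv_bm mV2 t1).
    by rewrite mulrCA.
- have b1 := Sv_bm mV1 s1; have b2 := Sv_bm mV1 s2; have bg := Sv_bm mV2 hg.
  rewrite (@eq_Rintegral _ _ _ P setT (fun w => f1 w * g w + f2 w * g w)); last first.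
    by move=> w _; rewrite mulrDl.
  rewrite RintegralD //; last 2 first.
  + exact/bm_int/bm_mul.
  + exact/bm_int/bm_mul.
  rewrite h1 // h2 // -mulrDl RintegralD //; exact/bm_int.
- have b1 := Sv_bm mV1 s1; have bg := Sv_bm mV2 hg.
  rewrite (@eq_Rintegral _ _ _ P setT (fun w => c * (f1 w * g w))); last first.
    by move=> w _; rewrite mulrA.
  rewrite RintegralZl //; last exact/bm_int/bm_mul.
  rewrite h1 // RintegralZl //; last exact/bm_int.
  by rewrite mulrA.
Qed.

End Indep.

Section Phi.
Context (R : realType).
Local Open Scope ereal_scope.
Definition fpos (x : R) : \bar R := (Num.max x 0)%:E.
Definition fneg (x : R) : \bar R := (Num.max (- x) 0)%:E.
Local Close Scope ereal_scope.
Definition phi n (x : R) := approx setT fpos n x - approx setT fneg n x.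

Lemma mfpos : measurable_fun setT fpos.
Proof.
apply/measurable_EFinP; apply: measurable_maxr => //.
Qed.

Lemma mfneg : measurable_fun setT fneg.
Proof.
apply/measurable_EFinP; apply: measurable_maxr => //.
Qed.

Lemma mdyadic (f : R -> \bar R) n k : measurable_fun setT f ->
  measurable (dyadic_approx setT f n k).
Proof.
move=> mf; rewrite /dyadic_approx; case: ifPn => // _.
rewrite -preimage_comp.
by apply: mf => //; apply/measurable_image_EFin; exact: measurable_itv.
Qed.

Lemma minteger (f : R -> \bar R) n : measurable_fun setT f ->
  measurable (integer_approx setT f n).
Proof. by move=> mf; exact: emeasurable_fun_c_infty. Qed.

Lemma approx_ge0 (f : R -> \bar R) n x : 0 <= approx setT f n x.
Proof.
rewrite /approx; apply: addr_ge0; last by rewrite mulr_ge0.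
by apply: sumr_ge0 => k _; rewrite !mulr_ge0.
Qed.

Lemma fpos_ge0 y : setT y -> (0 <= fpos y)%E.
Proof. by move=> _; rewrite lee_fin le_max lexx orbT. Qed.

Lemma fneg_ge0 y : setT y -> (0 <= fneg y)%E.
Proof. by move=> _; rewrite lee_fin le_max lexx orbT. Qed.

Lemma phi_bound n x : `|phi n x| <= `|x|.
Proof.
have a0 := approx_ge0 fpos n x; have b0 := approx_ge0 fneg n x.
have ha := le_approx n fpos_ge0 (I : setT x); rewrite lee_fin in ha.
have hb := le_approx n fneg_ge0 (I : setT x); rewrite lee_fin in hb.
have h1 : Num.max x 0 <= `|x| by rewrite ge_max normr_ge0 andbT; exact: ler_norm.
have h2 : Num.max (- x) 0 <= `|x| by rewrite ge_max normr_ge0 andbT -normrN; exact: ler_norm.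
rewrite /phi; move: a0 b0 ha hb h1 h2.
set a := approx _ _ _ _; set b := approx _ _ _ _; set m1 := Num.max _ _; set m2 := Num.max _ _.
move=> a0 b0 ha hb h1 h2; rewrite ler_norml; apply/andP; split; lra.
Qed.

Lemma phi_cvg (x : R) : (fun n => phi n x) @ \oo --> x.
Proof.
have e : Num.max x 0 - Num.max (- x) 0 = x.
  have [x0|x0] := leP 0 x.
    by rewrite max_r ?subr0 // oppr_le0.
  by rewrite max_l ?sub0r ?opprK // oppr_ge0 ltW.
rewrite -[X in _ --> X]e.
apply: cvgB.
  exact: (@cvg_approx _ _ _ setT fpos x fpos_ge0 I (ltry _)).
exact: (@cvg_approx _ _ _ setT fneg x fneg_ge0 I (ltry _)).
Qed.

End Phi.

Section SvPhi.
Context d (T : measurableType d) (R : realType).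
Variables (n : nat) (V : 'I_n -> T -> R).

Lemma Sv_approx (f : R -> \bar R) (mf : measurable_fun setT f) m i :
  Sv V (fun w => approx setT f m (V i w)).
Proof.
rewrite /approx; apply: SvA.
  apply: (@Sv_sum _ _ _ _ _ _ _ (fun (k : 'I_(m * 2 ^ m)) w => k%:R / 2 ^+ m * \1_(dyadic_approx setT f m k) (V i w))).
  by move=> k; apply: SvS; apply: Sv_coord; exact: mdyadic.
by apply: SvS; apply: Sv_coord; exact: minteger.
Qed.

Lemma Sv_phi m i : Sv V (fun w => phi m (V i w)).
Proof.
rewrite /phi; apply: SvA.
  by have h := Sv_approx (@mfpos R) m i; exact: h.
have -> : (fun w => - approx setT (@fneg R) m (V i w)) =
   (fun w => -1 * approx setT (@fneg R) m (V i w)).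
  by apply/funext => w; rewrite mulN1r.
by apply: SvS; have h := Sv_approx (@mfneg R) m i; exact: h.
Qed.

End SvPhi.

Section CvgProd.
Context (R : realType).

Lemma cvg_prod_seq (I : Type) (r : seq I) (u : nat -> I -> R) (L : I -> R) :
  (forall i, (fun k => u k i) @ \oo --> L i) ->
  (fun k => \prod_(i <- r) u k i) @ \oo --> \prod_(i <- r) L i.
Proof.
move=> h; elim: r => [|a r IH].
  rewrite big_nil; under eq_fun do rewrite big_nil; exact: cvg_cst.
rewrite big_cons; under eq_fun do rewrite big_cons.
exact: cvgM.
Qed.

Lemma cvg_expr (u : nat -> R) (L : R) e :
  u @ \oo --> L -> (fun k => u k ^+ e) @ \oo --> L ^+ e.
Proof.
move=> h; elim: e => [|e IH].
  rewrite expr0; under eq_fun do rewrite expr0; exact: cvg_cst.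
rewrite exprS; under eq_fun do rewrite exprS.
exact: cvgM.
Qed.

Lemma prod_le_sum n (u : 'I_n -> R) (a : 'I_n -> nat) :
  (forall i, 0 <= u i) ->
  \prod_i u i ^+ a i <= 1 + \sum_i u i ^+ (\sum_j a j)%N.
Proof.
move=> u0; set N := (\sum_j a j)%N.
set M := \big[Num.max/0]_i u i.
have uM i : u i <= M by exact: le_bigmax.
have M0 : 0 <= M by rewrite /M; elim/big_ind: _ => //= x y x0 y0; rewrite le_max x0.
apply: (@le_trans _ _ (M ^+ N)).
  rewrite /N -prodrXr; apply: ler_prod => i _.
  by rewrite exprn_ge0 //= lerXn2r // nnegrE.
suff : M ^+ N <= 1 + \sum_i u i ^+ N /\ 0 <= \sum_i u i ^+ N by case.
rewrite /M; pose K := fun m s : R => m ^+ N <= 1 + s /\ 0 <= s /\ 0 <= m.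
suff : K (\big[Num.max/0]_i u i) (\sum_i u i ^+ N) by case=> [? []].
apply: (big_rec2 K) => [|i m s _ [hm [hs m0]]].
  by rewrite /K expr0n; case: (N == 0)%N => /=; rewrite ?addr0 ?ler01 ?lerDr.
have ui := u0 i; have uiN : 0 <= u i ^+ N by rewrite exprn_ge0.
split; last first.
  by split; [rewrite addr_ge0|rewrite le_max ui].
have [um|um] := leP m (u i).
  lra.
lra.
Qed.

End CvgProd.

Section Mono.
Context d (T : measurableType d) (R : realType) (P : probability T R).

Definition mono n (V : 'I_n -> T -> R) (a : 'I_n -> nat) (w : T) :=
  \prod_(i < n) V i w ^+ a i.

Lemma int_prod (f g : T -> R) : measurable_fun setT f -> measurable_fun setT g ->
  P.-integrable setT (EFin \o (fun w => f w ^+ 2)) ->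
  P.-integrable setT (EFin \o (fun w => g w ^+ 2)) ->
  P.-integrable setT (EFin \o (fun w => f w * g w)).
Proof.
move=> mf mg hf hg.
apply: (@le_integrable _ _ _ _ _ _ _ (EFin \o (fun w => f w ^+ 2 + g w ^+ 2))) => //.
- by apply/measurable_EFinP; exact: measurable_funM.
- move=> w _ /=; rewrite !lee_fin normrM.
  rewrite [X in _ <= X]ger0_norm ?addr_ge0 ?sqr_ge0 //.
  rewrite -[f w ^+ 2]real_normK ?num_real // -[g w ^+ 2]real_normK ?num_real //.
  have := normr_ge0 (f w); have := normr_ge0 (g w).
  set u := `|f w|; set v := `|g w|; nra.
- have -> : (EFin \o (fun w => f w ^+ 2 + g w ^+ 2)) =
     (EFin \o (fun w => f w ^+ 2)) \+ (EFin \o (fun w => g w ^+ 2)) by [].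
  exact: integrableD.
Qed.

Lemma int_normX (h : T -> R) (N : nat) :
  P.-integrable setT (fun w => (h w ^+ N)%:E) ->
  P.-integrable setT (fun w => (`|h w| ^+ N)%:E).
Proof.
move=> hi; have := integrable_abse hi.
by apply: eq_integrable => // w _ /=; rewrite normrX.
Qed.

Variables (n : nat) (V : 'I_n -> T -> R).
Hypotheses (mV : forall i, measurable_fun setT (V i))
  (hmom : forall i p, P.-integrable setT (fun w => (V i w ^+ p)%:E)).

Lemma mono_meas a : measurable_fun setT (mono V a).
Proof. by apply: measurable_prod => i _; exact: measurable_funX. Qed.

Lemma mono_int a : P.-integrable setT (EFin \o mono V a).
Proof.
set N := (\sum_j a j)%N.
apply: (@le_integrable _ _ _ _ _ _ _ (fun w => (1 + \sum_i `|V i w| ^+ N)%:E)) => //.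
- exact/measurable_EFinP/mono_meas.
- move=> w _ /=; rewrite !lee_fin /mono normr_prod.
  apply: (le_trans _ (ler_norm _)).
  under eq_bigr do rewrite normrX.
  by apply: prod_le_sum => i.
- have -> : (fun w => (1 + \sum_i `|V i w| ^+ N)%:E) =
     (EFin \o cst 1) \+ (fun w => \sum_i (`|V i w| ^+ N)%:E).
    by apply/funext => w /=; rewrite EFinD sumEFin.
  apply: integrableD => //; first exact: finite_measure_integrable_cst.
  by apply: integrable_sum => // i _; apply: int_normX.
Qed.

Lemma mono_sq a w : mono V a w ^+ 2 = mono V (fun i => (a i * 2)%N) w.
Proof. by rewrite /mono -prodrXl; apply: eq_bigr => i _; rewrite exprM. Qed.

Lemma mono_sq_int a : P.-integrable setT (EFin \o (fun w => mono V a w ^+ 2)).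
Proof.
have -> : (fun w => mono V a w ^+ 2) = mono V (fun i => (a i * 2)%N).
  by apply/funext => w; rewrite mono_sq.
exact: mono_int.
Qed.

End Mono.

Section DCT.
Context d (T : measurableType d) (R : realType) (P : probability T R).

Lemma dct_R (u : nat -> T -> R) (f G : T -> R) :
  (forall k, measurable_fun setT (u k)) -> measurable_fun setT f ->
  (forall w, (fun k => u k w) @ \oo --> f w) ->
  P.-integrable setT (EFin \o G) ->
  (forall k w, `|u k w| <= G w) ->
  (fun k => \int[P]_w u k w) @ \oo --> \int[P]_w f w.
Proof.
move=> mu mf cu iG bu.
have := @dominated_convergence _ _ _ P setT measurableT (fun k w => (u k w)%:E)
  (EFin \o f) (EFin \o G).
case.
- by move=> k; apply/measurable_EFinP.
- exact/measurable_EFinP.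
- apply: aeW => w _; apply: cvg_EFin; first exact: nearW.
  exact: cu.
- exact: iG.
- by apply: aeW => w k _; rewrite lee_fin; exact: bu.
move=> intf _ h.
have e : (\int[P]_x (EFin \o f) x)%E = (\int[P]_w f w)%:E.
  by rewrite fineK // integrable_fin_num.
rewrite e in h; exact: (fine_cvg h).
Qed.

End DCT.

Section MonoIndep.
Context d (T : measurableType d) (R : realType) (P : probability T R).
Variables (n1 n2 : nat) (V1 : 'I_n1 -> T -> R) (V2 : 'I_n2 -> T -> R).
Hypotheses (mV1 : forall i, measurable_fun setT (V1 i))
  (mV2 : forall i, measurable_fun setT (V2 i))
  (hm1 : forall i p, P.-integrable setT (fun w => (V1 i w ^+ p)%:E))
  (hm2 : forall i p, P.-integrable setT (fun w => (V2 i w ^+ p)%:E)).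
Hypothesis hind : forall (A : 'I_n1 -> set R) (B : 'I_n2 -> set R),
    (forall i, measurable (A i)) -> (forall j, measurable (B j)) ->
    P (rect V1 A `&` rect V2 B) = (P (rect V1 A) * P (rect V2 B))%E.

Let phiV n (V : 'I_n -> T -> R) k : 'I_n -> T -> R := fun i w => phi k (V i w).

Lemma Sv_phimono n (V : 'I_n -> T -> R) k a : Sv V (mono (phiV V k) a).
Proof. by apply: Sv_prod => i; apply: Sv_pow; exact: Sv_phi. Qed.

Lemma phimono_bound n (V : 'I_n -> T -> R) k a w :
  `|mono (phiV V k) a w| <= `|mono V a w|.
Proof.
rewrite /mono !normr_prod; apply: ler_prod => i _.
by rewrite normr_ge0 /= !normrX lerXn2r ?nnegrE // phi_bound.
Qed.

Lemma phimono_cvg n (V : 'I_n -> T -> R) a w :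
  (fun k => mono (phiV V k) a w) @ \oo --> mono V a w.
Proof.
apply: (@cvg_prod_seq _ _ _ (fun k i => phi k (V i w) ^+ a i)) => i.
apply: cvg_expr; exact: phi_cvg.
Qed.

Lemma mono_indep a b :
  \int[P]_w (mono V1 a w * mono V2 b w) =
  \int[P]_w mono V1 a w * \int[P]_w mono V2 b w.
Proof.
have bm1 k := Sv_bm mV1 (Sv_phimono V1 k a).
have bm2 k := Sv_bm mV2 (Sv_phimono V2 k b).
have eqk k : \int[P]_w (mono (phiV V1 k) a w * mono (phiV V2 k) b w) =
    \int[P]_w mono (phiV V1 k) a w * \int[P]_w mono (phiV V2 k) b w.
  by apply: (Sv_indep mV1 mV2 hind); exact: Sv_phimono.
have m1 := mono_meas mV1 a; have m2 := mono_meas mV2 b.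
have c1 : (fun k => \int[P]_w mono (phiV V1 k) a w) @ \oo --> \int[P]_w mono V1 a w.
  apply: (@dct_R _ _ _ P _ _ (fun w => `|mono V1 a w|)) => //.
  - by move=> k; case: (bm1 k).
  - exact: phimono_cvg.
  - exact/integrable_norm/mono_int.
  - by move=> k w; exact: phimono_bound.
have c2 : (fun k => \int[P]_w mono (phiV V2 k) b w) @ \oo --> \int[P]_w mono V2 b w.
  apply: (@dct_R _ _ _ P _ _ (fun w => `|mono V2 b w|)) => //.
  - by move=> k; case: (bm2 k).
  - exact: phimono_cvg.
  - exact/integrable_norm/mono_int.
  - by move=> k w; exact: phimono_bound.
have c3 : (fun k => \int[P]_w (mono (phiV V1 k) a w * mono (phiV V2 k) b w)) @ \oo
     --> \int[P]_w (mono V1 a w * mono V2 b w).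
  apply: (@dct_R _ _ _ P _ _ (fun w => `|mono V1 a w * mono V2 b w|)) => //.
  - by move=> k; case: (bm_mul (bm1 k) (bm2 k)).
  - exact: measurable_funM.
  - by move=> w; apply: cvgM; exact: phimono_cvg.
  - apply: integrable_norm; apply: int_prod => //; exact: mono_sq_int.
  - by move=> k w; rewrite !normrM ler_pM ?phimono_bound.
have c4 : (fun k => \int[P]_w (mono (phiV V1 k) a w * mono (phiV V2 k) b w)) @ \oo
     --> \int[P]_w mono V1 a w * \int[P]_w mono V2 b w.
  under eq_fun do rewrite eqk.
  exact: cvgM c1 c2.
exact: (cvg_unique _ c3 c4).
Qed.

End MonoIndep.

Section Poly.
Context d (T : measurableType d) (R : realType) (P : probability T R).

Lemma Rint_sum (I : Type) (r : seq I) (F : I -> T -> R) :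
  (forall i, P.-integrable setT (EFin \o F i)) ->
  \int[P]_w (\sum_(i <- r) F i w) = \sum_(i <- r) \int[P]_w F i w.
Proof.
move=> hF; elim: r => [|a r IH].
  rewrite big_nil; under eq_Rintegral do rewrite big_nil.
  by rewrite /Rintegral integral0.
rewrite big_cons; under eq_Rintegral do rewrite big_cons.
rewrite RintegralD // ?IH //.
have -> : EFin \o (fun w => \sum_(i <- r) F i w) = (fun w => \sum_(i <- r) (F i w)%:E).
  by apply/funext => w /=; rewrite sumEFin.
by apply: integrable_sum => // i _; exact: hF.
Qed.

Definition pev n (V : 'I_n -> T -> R) (p : mpoly.mpoly n R) (w : T) :=
  mpoly.meval (fun i => V i w) p.

Lemma pevE n (V : 'I_n -> T -> R) p :
  pev V p = (fun w => \sum_(m <- mpoly.msupp p) mpoly.mcoeff m p * mono V (mpoly.fun_of_multinom m) w).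
Proof. by apply/funext => w; rewrite /pev mpoly.mevalE. Qed.

Variables (n : nat) (V : 'I_n -> T -> R).
Hypotheses (mV : forall i, measurable_fun setT (V i))
  (hmom : forall i p, P.-integrable setT (fun w => (V i w ^+ p)%:E)).

Lemma pev_meas p : measurable_fun setT (pev V p).
Proof.
rewrite pevE; apply: measurable_sum => m.
by apply: measurable_funM => //; exact: mono_meas.
Qed.

Lemma pev_int p : P.-integrable setT (EFin \o pev V p).
Proof.
rewrite pevE.
have -> : EFin \o (fun w => \sum_(m <- mpoly.msupp p) mpoly.mcoeff m p * mono V (mpoly.fun_of_multinom m) w)
   = (fun w => \sum_(m <- mpoly.msupp p) ((mpoly.mcoeff m p)%:E * (mono V (mpoly.fun_of_multinom m) w)%:E)%E).
  by apply/funext => w /=; rewrite sumEFin.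
apply: integrable_sum => // m _; apply: integrableZl => //.
exact: mono_int.
Qed.

Lemma pev_sq_int p : P.-integrable setT (EFin \o (fun w => pev V p w ^+ 2)).
Proof.
have -> : (fun w => pev V p w ^+ 2) = pev V (MPh.pmul p p).
  by apply/funext => w; rewrite /pev MPh.meval_pmul expr2.
exact: pev_int.
Qed.

End Poly.

Section PolyIndep.
Context d (T : measurableType d) (R : realType) (P : probability T R).
Variables (n1 n2 : nat) (V1 : 'I_n1 -> T -> R) (V2 : 'I_n2 -> T -> R).
Hypotheses (mV1 : forall i, measurable_fun setT (V1 i))
  (mV2 : forall i, measurable_fun setT (V2 i))
  (hm1 : forall i p, P.-integrable setT (fun w => (V1 i w ^+ p)%:E))
  (hm2 : forall i p, P.-integrable setT (fun w => (V2 i w ^+ p)%:E)).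
Hypothesis hind : forall (A : 'I_n1 -> set R) (B : 'I_n2 -> set R),
    (forall i, measurable (A i)) -> (forall j, measurable (B j)) ->
    P (rect V1 A `&` rect V2 B) = (P (rect V1 A) * P (rect V2 B))%E.

Lemma int_scale (c : R) (f : T -> R) : P.-integrable setT (EFin \o f) ->
  P.-integrable setT (EFin \o (fun w => c * f w)).
Proof.
move=> hf; have := integrableZl measurableT c hf.
by apply: eq_integrable => // w _ /=; rewrite EFinM.
Qed.

Lemma mono_pev_indep a q :
  \int[P]_w (mono V1 a w * pev V2 q w) =
  \int[P]_w mono V1 a w * \int[P]_w pev V2 q w.
Proof.
rewrite pevE.
under eq_Rintegral do rewrite mulr_sumr.
rewrite Rint_sum; last first.
  move=> m; apply: int_prod.
  - exact: mono_meas.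
  - by apply: measurable_funM => //; exact: mono_meas.
  - exact: mono_sq_int.
  - under eq_fun do rewrite exprMn.
    apply: int_scale; exact: mono_sq_int.
rewrite Rint_sum; last by move=> m; apply: int_scale; exact: mono_int.
rewrite mulr_sumr; apply: eq_bigr => m _.
under eq_Rintegral do rewrite mulrCA.
rewrite RintegralZl //; last by apply: int_prod; try exact: mono_meas; exact: mono_sq_int.
rewrite RintegralZl //; last exact: mono_int.
rewrite (mono_indep mV1 mV2 hm1 hm2 hind).
by rewrite mulrCA.
Qed.

Lemma pev_indep p q :
  \int[P]_w (pev V1 p w * pev V2 q w) =
  \int[P]_w pev V1 p w * \int[P]_w pev V2 q w.
Proof.
rewrite [pev V1 p]pevE.
under eq_Rintegral do rewrite mulr_suml.
rewrite Rint_sum; last first.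
  move=> m; rewrite -/(pev V2 q); under eq_fun do rewrite -mulrA.
  apply: int_scale; apply: int_prod.
  - exact: mono_meas.
  - exact: pev_meas.
  - exact: mono_sq_int.
  - exact: pev_sq_int.
rewrite Rint_sum; last by move=> m; apply: int_scale; exact: mono_int.
rewrite mulr_suml; apply: eq_bigr => m _.
under eq_Rintegral do rewrite -mulrA.
rewrite RintegralZl //; last first.
  apply: int_prod; [exact: mono_meas|exact: pev_meas|exact: mono_sq_int|exact: pev_sq_int].
rewrite RintegralZl //; last exact: mono_int.
by rewrite mono_pev_indep mulrA.
Qed.

End PolyIndep.


Theorem mainTheorem1 (R : realType) (dT : measure_display) (T : measurableType dT)
  (P : probability T R) (l d : nat)
  (X : 'I_l -> T -> R) (Y : 'I_d -> T -> R) (rho : mpol l R)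
  (Pp : nat -> mindex l -> mpol l R) (Rs : mindex d -> mpol d R) :
  (0 < l)%N -> (0 < d)%N ->
  (forall i, measurable_fun setT (X i)) ->
  (forall j, measurable_fun setT (Y j)) ->
  (msz rho <= 2)%N ->
  {ae P, forall w, peval (vec_at X w) rho != 0} ->
  indep_vec P X (Zof rho X Y) ->
  (forall i (p : nat), P.-integrable setT (fun w => (X i w ^+ p)%:E)) ->
  (forall j (p : nat), P.-integrable setT (fun w => (Zof rho X Y j w ^+ p)%:E)) ->
  (forall m k, msz (Pp m k) = (mideg k).+1) ->
  (forall m (k k' : mindex l), mpoly.multinom_val k != mpoly.multinom_val k' ->
     (\int[P]_w (peval (vec_at X w) (Pp m k) * peval (vec_at X w) (Pp m k')
                 * peval (vec_at X w) rho ^+ (2 * m))%:E = 0)%E) ->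
  (forall s, msz (Rs s) = (mideg s).+1) ->
  (forall (s s' : mindex d), mpoly.multinom_val s != mpoly.multinom_val s' ->
     (\int[P]_w (peval (vec_at (Zof rho X Y) w) (Rs s)
                 * peval (vec_at (Zof rho X Y) w) (Rs s'))%:E = 0)%E) ->
  (forall k s, exists g : mpol (l + d) R,
     msz g = (mideg k + mideg s).+1 /\
     forall x y, peval x rho != 0 -> peval (catv x y) g = Gfun rho Pp Rs k s x y)
  /\
  (forall k s k' s',
     (\int[P]_w (Gfun rho Pp Rs k s (vec_at X w) (vec_at Y w)
                 * Gfun rho Pp Rs k' s' (vec_at X w) (vec_at Y w))%:E =
      ((mpoly.multinom_val k == mpoly.multinom_val k') && (mpoly.multinom_val s == mpoly.multinom_val s'))%:R%:E
      * (\int[P]_w (peval (vec_at X w) (Pp (mideg s) k) ^+ 2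
                    * peval (vec_at X w) rho ^+ (2 * mideg s))%:E)
      * (\int[P]_w (peval (vec_at (Zof rho X Y) w) (Rs s) ^+ 2)%:E))%E).

Proof.
move=> hl hd mX mY hrho hae hind hmX hmZ hPd hPo hRd hRo.
split.
  move=> k s.
  have [g [hg1 hg2]] := Part1.part1 hrho (hPd (mideg s) k) (hRd s).
  by exists g; split.
set Z := Zof rho X Y.
have mZ j : measurable_fun setT (Z j).
  have := hmZ j 1%N; case/integrableP => /measurable_EFinP h _.
  rewrite (_ : Z j = (fun w => Z j w ^+ 1)); first exact: h.
  by apply/funext => w; rewrite expr1.
have hindZ : forall (A : 'I_l -> set R) (B : 'I_d -> set R),
    (forall i, measurable (A i)) -> (forall j, measurable (B j)) ->
    P (rect X A `&` rect Z B) = (P (rect X A) * P (rect Z B))%E by exact: hind.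
have int_EFin (f : T -> R) : P.-integrable setT (EFin \o f) ->
    (\int[P]_w (f w)%:E = (\int[P]_w f w)%:E)%E.
  by move=> hf; rewrite fineK // integrable_fin_num.
move=> k s k' s'.
pose pF := MPh.pmul (MPh.pmul (Pp (mideg s) k) (Pp (mideg s') k'))
                    (MPh.pexp rho (mideg s + mideg s')).
pose pZ := MPh.pmul (Rs s) (Rs s').
have eG w : Gfun rho Pp Rs k s (vec_at X w) (vec_at Y w) *
            Gfun rho Pp Rs k' s' (vec_at X w) (vec_at Y w) = pev X pF w * pev Z pZ w.
  rewrite /Gfun /pev !MPh.meval_pmul MPh.meval_pexp exprD /Z /Zof /vec_at.
  ring.
rewrite (eq_integral (fun w => (pev X pF w * pev Z pZ w)%:E)); last first.
  by move=> w _; rewrite eG.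
rewrite int_EFin; last first.
  apply: int_prod; [exact: pev_meas|exact: pev_meas|exact: pev_sq_int|exact: pev_sq_int].
rewrite (pev_indep mX mZ hmX hmZ hindZ).
have [es|ns] := eqVneq (mpoly.multinom_val s) (mpoly.multinom_val s'); last first.
  have h0 : (\int[P]_(x in setT) (pev Z pZ x)%:E)%E = 0%E.
    rewrite -(hRo s s' ns); apply: eq_integral => w _.
    by rewrite /pev MPh.meval_pmul.
  by rewrite [X in (_ * X)%R]/Rintegral h0 /= mulr0 andbF /= !mul0e.
have injd : forall (a b : mindex d), mpoly.multinom_val a = mpoly.multinom_val b -> a = b.
  by case=> ? [?] /= ->.
have injl : forall (a b : mindex l), mpoly.multinom_val a = mpoly.multinom_val b -> a = b.
  by case=> ? [?] /= ->.
have e := injd _ _ es; subst s'.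
rewrite ?eqxx ?andbT.
have [ek|nk] := eqVneq (mpoly.multinom_val k) (mpoly.multinom_val k'); last first.
  have h0 : (\int[P]_(x in setT) (pev X pF x)%:E)%E = 0%E.
    rewrite -(hPo (mideg s) k k' nk); apply: eq_integral => w _.
    by rewrite /pev !MPh.meval_pmul MPh.meval_pexp addnn -mul2n.
  by rewrite [X in (X * _)%R]/Rintegral h0 /= mul0r /= !mul0e.
have e := injl _ _ ek; subst k'.
rewrite ?eqxx /= mul1e.
rewrite (eq_integral (fun w => (pev X pF w)%:E)); last first.
  by move=> w _; rewrite /pev !MPh.meval_pmul MPh.meval_pexp addnn -mul2n expr2.
rewrite [X in (_ * X)%E](eq_integral (fun w => (pev Z pZ w)%:E)); last first.
  by move=> w _; rewrite /pev !MPh.meval_pmul expr2.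
rewrite !int_EFin //; exact: pev_int.
Qed.
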